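(* For $n\ge2$ and all $P,Q\in\Gamma_n$, $D_{\Psi J}(P\|Q)\le \frac43 D_{\Psi T}(P\|Q)$.
   Context: $\Gamma_n=\{P=(p_1,\dots,p_n): p_i>0,\ \sum p_i=1\}$. $\Psi(P\|Q)=\sum_{i=1}^n\frac{(p_i-q_i)^2(p_i+q_i)}{p_iq_i}$; $J(P\|Q)=\sum_{i=1}^n(p_i-q_i)\ln\frac{p_i}{q_i}$; $T(P\|Q)=\sum_{i=1}^n\frac{p_i+q_i}{2}\ln\frac{p_i+q_i}{2\sqrt{p_iq_i}}$. $D_{\Psi J}=\frac1{16}\Psi-\frac18J$, $D_{\Psi T}=\frac1{16}\Psi-T$. *)

(* Defs.v *)
(* concrete reals R. Probability vectors are functions nat -> R,
   whose coordinates 0..n-1 are used (p_1..p_n of the paper = P 0 .. P (n-1)). *)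
From Stdlib Require Import Reals.
Open Scope R_scope.

Fixpoint sumR (n : nat) (f : nat -> R) : R :=
  match n with
  | O => 0
  | S m => sumR m f + f m
  end.

Definition Gamma (n : nat) (P : nat -> R) : Prop :=
  (forall i, (i < n)%nat -> 0 < P i) /\ sumR n P = 1.

Definition Psi (n : nat) (P Q : nat -> R) : R :=
  sumR n (fun i => (P i - Q i) ^ 2 * (P i + Q i) / (P i * Q i)).

Definition Jdiv (n : nat) (P Q : nat -> R) : R :=
  sumR n (fun i => (P i - Q i) * ln (P i / Q i)).

Definition Tdiv (n : nat) (P Q : nat -> R) : R :=
  sumR n (fun i => (P i + Q i) / 2 * ln ((P i + Q i) / (2 * sqrt (P i * Q i)))).

Definition D_PsiJ (n : nat) (P Q : nat -> R) : R := Psi n P Q / 16 - Jdiv n P Q / 8.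
Definition D_PsiT (n : nat) (P Q : nat -> R) : R := Psi n P Q / 16 - Tdiv n P Q.

(* Main.v *)
Require Import Defs.
From Stdlib Require Import Reals Lra.
From Coquelicot Require Import Coquelicot.
Open Scope R_scope.
Definition kf x := ln x + (x^8 - 8*x^6 + 8*x^2 - 1)/(24*x^4).
Definition hf x := (x^2-1)^2/x^2 + 12*((x^2-1)/(x^2+1)) * ln x - 32 * ln ((x^2+1)/(2*x)).
Ltac pos := repeat (apply Rmult_lt_0_compat || apply Rplus_lt_0_compat || apply Rinv_0_lt_compat); try lra.
Lemma kd x : 0 < x -> is_derive kf x ((x^2-1)^4/(6*x^5)).
Proof. intros. unfold kf. auto_derive.
 - split; [lra|split; [|auto]]. assert (0 < x*(x*(x*(x*1)))) by pos. lra.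
 - field. lra. Qed.
Lemma hd x : 0 < x -> is_derive hf x (48*x*kf x/(x^2+1)^2).
Proof. intros. unfold hf, kf. auto_derive.
 - repeat split; auto.
   + assert (0 < x*(x*1)) by pos. lra.
   + assert (0 < x*(x*1)) by pos. lra.
   + lra.
   + assert (0 < x*(x*1)+1) by pos. assert (0 < 2*x) by lra. pos.


 - assert (0 < x*(x*1)+1) by pos. field. repeat split; try lra. Qed.
Lemma mvt_pos (g g' : R -> R) : (forall x, 0 < x -> is_derive g x (g' x)) ->
  (forall x, 0 < x -> 0 <= (x-1) * g' x) -> g 1 = 0 -> forall x, 0 < x -> 0 <= g x.
Proof.
  intros D S G x Hx.
  destruct (Rtotal_order x 1) as [Hl|[He|Hl]].
  - destruct (MVT_cor2 g g' x 1 Hl) as [c [Hc1 Hc2]].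
    { intros c Hc. apply is_derive_Reals. apply D. lra. }
    assert (0 <= (c-1) * g' c) by (apply S; lra).
    assert (g' c <= 0) by nra. nra.
  - subst; lra.
  - destruct (MVT_cor2 g g' 1 x Hl) as [c [Hc1 Hc2]].
    { intros c Hc. apply is_derive_Reals. apply D. lra. }
    assert (0 <= (c-1) * g' c) by (apply S; lra).
    assert (g' c >= 0) by nra. nra.
Qed.
Lemma mvt_sgn (g g' : R -> R) : (forall x, 0 < x -> is_derive g x (g' x)) ->
  (forall x, 0 < x -> 0 <= g' x) -> g 1 = 0 -> forall x, 0 < x -> 0 <= (x-1) * g x.
Proof.
  intros D S G x Hx.
  destruct (Rtotal_order x 1) as [Hl|[He|Hl]].
  - destruct (MVT_cor2 g g' x 1 Hl) as [c [Hc1 Hc2]].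
    { intros c Hc. apply is_derive_Reals. apply D. lra. }
    assert (0 <= g' c) by (apply S; lra).
    assert (g x <= 0) by nra. nra.
  - subst; lra.
  - destruct (MVT_cor2 g g' 1 x Hl) as [c [Hc1 Hc2]].
    { intros c Hc. apply is_derive_Reals. apply D. lra. }
    assert (0 <= g' c) by (apply S; lra).
    assert (0 <= g x) by nra. nra.
Qed.
Lemma k_sgn x : 0 < x -> 0 <= (x-1) * kf x.
Proof.
  apply (mvt_sgn kf (fun x => (x^2-1)^4/(6*x^5))).
  - apply kd.
  - intros y Hy. apply Rmult_le_pos.
    replace ((y^2-1)^4) with (((y^2-1)^2)^2) by ring.
    apply pow2_ge_0. left. apply Rinv_0_lt_compat. apply Rmult_lt_0_compat. lra. apply pow_lt; lra.
  - unfold kf. rewrite ln_1. field.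
Qed.
Lemma h_pos x : 0 < x -> 0 <= hf x.
Proof.
  apply (mvt_pos hf (fun x => 48*x*kf x/(x^2+1)^2)).
  - apply hd.
  - intros y Hy. 
    replace ((y-1) * (48*y*kf y/(y^2+1)^2)) with (48*y/(y^2+1)^2 * ((y-1)*kf y)).
    2:{ field. nra. }
    apply Rmult_le_pos. 2: apply k_sgn; auto.
    left. apply Rmult_lt_0_compat. lra. apply Rinv_0_lt_compat. apply pow_lt. nra.
  - unfold hf. replace ((1^2+1)/(2*1)) with 1 by field. rewrite ln_1. field.
Qed.
Lemma term_xb (x b : R) : 0 < x -> 0 < b ->
  let p := (x*b)*(x*b) in let q := b*b in
  0 <= (p-q)^2*(p+q)/(p*q) + 6*((p-q)*ln(p/q)) - 64*((p+q)/2*ln((p+q)/(2*sqrt(p*q)))).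
Proof.
  intros Hx Hb p q.
  assert (E1 : p/q = x*x) by (unfold p, q; field; lra).
  assert (E3 : sqrt (p*q) = x*b*b).
  { unfold p, q. replace ((x*b)*(x*b)*(b*b)) with ((x*b*b)*(x*b*b)) by ring.
    apply sqrt_square. assert (0 < x*b*b) by pos. lra. }
  assert (E2 : (p+q)/(2*sqrt(p*q)) = (x^2+1)/(2*x)).
  { rewrite E3. unfold p, q. field. lra. }
  rewrite E1, E2, ln_mult by lra.
  assert (H := h_pos x Hx). unfold hf in H.
  replace ((p-q)^2*(p+q)/(p*q) + 6*((p-q)*(ln x + ln x)) - 64*((p+q)/2*ln((x^2+1)/(2*x))))
    with ((b^2*(x^2+1)) * ((x^2-1)^2/x^2 + 12*((x^2-1)/(x^2+1)) * ln x - 32 * ln ((x^2+1)/(2*x)))).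
  2:{ unfold p, q. field. split; nra. }
  apply Rmult_le_pos; auto. nra.
Qed.
Lemma term_pos (p q : R) : 0 < p -> 0 < q ->
  0 <= (p-q)^2*(p+q)/(p*q) + 6*((p-q)*ln(p/q)) - 64*((p+q)/2*ln((p+q)/(2*sqrt(p*q)))).
Proof.
  intros Hp Hq.
  assert (Hb : 0 < sqrt q) by (apply sqrt_lt_R0; lra).
  assert (Ha : 0 < sqrt p) by (apply sqrt_lt_R0; lra).
  assert (Hx : 0 < sqrt p / sqrt q) by pos.
  pose proof (term_xb _ _ Hx Hb) as T. simpl in T.
  replace (sqrt p / sqrt q * sqrt q * (sqrt p / sqrt q * sqrt q)) with p in T.
  2:{ replace (sqrt p / sqrt q * sqrt q) with (sqrt p) by (field; lra). rewrite sqrt_sqrt; lra. }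
  rewrite sqrt_sqrt in T by lra. exact T.
Qed.
Lemma sum_comb n (f g h : nat -> R) :
  (forall i, (i < n)%nat -> 0 <= f i + 6*g i - 64*h i) ->
  0 <= sumR n f + 6*sumR n g - 64*sumR n h.
Proof.
  induction n as [|n IH]; intros H; simpl.
  - lra.
  - assert (A := IH (fun i Hi => H i (Nat.lt_lt_succ_r _ _ Hi))).
    assert (B := H n (Nat.lt_succ_diag_r n)). lra.
Qed.

Theorem proposition5p13 (n : nat) (P Q : nat -> R) :
  (2 <= n)%nat -> Gamma n P -> Gamma n Q ->
  D_PsiJ n P Q <= 4 / 3 * D_PsiT n P Q.
Proof.
  intros _ [HP _] [HQ _].
  assert (S : 0 <= Psi n P Q + 6 * Jdiv n P Q - 64 * Tdiv n P Q).
  { unfold Psi, Jdiv, Tdiv. apply sum_comb. intros i Hi.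
    apply term_pos; auto. }
  unfold D_PsiJ, D_PsiT. lra.
Qed.
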